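(* Let $\varepsilon\ge0$, $\lambda=e^{\varepsilon}-1$, and let $G=(g_1,\dots,g_t)$, $G'=(g'_1,\dots,g'_t)$ be probability vectors (nonnegative entries summing to $1$). For $S\subseteq[t]$ put $$\overline H(S)=\frac{\sum_{i\in[t]\setminus S}g_i+e^{\varepsilon}\sum_{j\in S}g_j}{\sum_{i\in[t]\setminus S}g'_i+e^{\varepsilon}\sum_{j\in S}g'_j}.$$ Run the following greedy procedure: let $q_i=g_i/g'_i$ (with $q_i=+\infty$ if $g'_i=0<g_i$, and $q_i$ arbitrary if $g_i=g'_i=0$); order the indices as $\pi(1),\dots,\pi(t)$ with $q_{\pi(1)}\ge q_{\pi(2)}\ge\dots\ge q_{\pi(t)}$; set $A=B=0$; for $r=1,\dots,t$ in turn, if $q_{\pi(r)}\ge\frac{1+A\lambda}{1+B\lambda}$ then replace $A$ by $A+g_{\pi(r)}$ and $B$ by $B+g'_{\pi(r)}$; finally output $\overline H^{\mathrm{alg}}=\frac{1+A\lambda}{1+B\lambda}$. Then $\overline H^{\mathrm{alg}}=\max_{S\subseteq[t]}\overline H(S)$.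
   Context: $[t]=\{1,\dots,t\}$. In the application, $G=(p(a_1\mid x),\dots,p(a_t\mid x))$ and $G'=(p(a_1\mid x'),\dots,p(a_t\mid x'))$ are conditional distributions of an attribute $\hat X$ with alphabet $\{a_1,\dots,a_t\}$ given two values $x,x'$ of another attribute $X_k$. *)

(* Defs.v *)
From HB Require Import structures.
From mathcomp Require Import all_boot all_order all_algebra all_fingroup.
From mathcomp Require Import reals ereal.
From mathcomp Require Import sequences exp.
Set Implicit Arguments. Unset Strict Implicit. Unset Printing Implicit Defensive.
Import Order.TTheory GRing.Theory Num.Theory.
Local Open Scope ring_scope.

Definition prob_vec (R : realType) (t : nat) (g : 'I_t -> R) : Prop :=
  (forall i, 0 <= g i) /\ \sum_(i < t) g i = 1.

Definition Hbar (R : realType) (t : nat) (eps : R) (g g' : 'I_t -> R)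
    (S : {set 'I_t}) : R :=
  (\sum_(i in ~: S) g i + expR eps * \sum_(j in S) g j) /
  (\sum_(i in ~: S) g' i + expR eps * \sum_(j in S) g' j).

Definition greedy_step (R : realType) (t : nat) (lam : R) (q : 'I_t -> \bar R)
    (g g' : 'I_t -> R) (AB : R * R) (i : 'I_t) : R * R :=
  if (((1 + AB.1 * lam) / (1 + AB.2 * lam))%:E <= q i)%E
  then (AB.1 + g i, AB.2 + g' i) else AB.

Definition H_alg (R : realType) (t : nat) (lam : R) (q : 'I_t -> \bar R)
    (pi : {perm 'I_t}) (g g' : 'I_t -> R) : R :=
  let AB := foldl (greedy_step lam q g g') (0, 0) [seq pi r | r <- enum 'I_t] in
  (1 + AB.1 * lam) / (1 + AB.2 * lam).

(* Main.v *)
Require Import Defs.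
From HB Require Import structures.
From mathcomp Require Import all_boot all_order all_algebra all_fingroup.
From mathcomp Require Import reals ereal.
From mathcomp Require Import sequences exp.
From mathcomp Require Import ring lra.
Import Order.TTheory GRing.Theory Num.Theory.
Local Open Scope ring_scope.

Lemma le_frac (R : realFieldType) (a b c d : R) :
  0 < b -> 0 < d -> (a / b <= c / d) = (a * d <= c * b).
Proof. by move=> b0 d0; rewrite ler_pdivrMr // mulrAC ler_pdivlMr. Qed.

Lemma step_real (R : realType) (lam A B gx gx' : R) (qx : \bar R) :
  0 <= lam -> 0 <= B -> 0 <= gx -> 0 <= gx' ->
  (0 < gx' -> qx = (gx / gx')%:E) -> (gx' = 0 -> 0 < gx -> qx = +oo%E) ->
  (((1 + A * lam) / (1 + B * lam))%:E <= qx)%E ->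
  (1 + A * lam) / (1 + B * lam) <= (1 + (A + gx) * lam) / (1 + (B + gx') * lam)
  /\ (((1 + (A + gx) * lam) / (1 + (B + gx') * lam))%:E <= qx)%E.
Proof.
move=> l0 B0 g0 g'0 hq1 hq2 hle.
have b0 : 0 < 1 + B * lam by clear -l0 B0; nra.
have b1 : 0 < 1 + (B + gx') * lam by clear -l0 B0 g'0; nra.
have [gp|] := ltP 0 gx'.
  move: hle; rewrite (hq1 gp) lee_fin le_frac // => hle.
  by rewrite lee_fin !le_frac //; clear hq1 hq2; split; nra.
move=> gle; have g'z : gx' = 0 by apply/le_anti; rewrite gle.
rewrite g'z addr0; have [gp|] := ltP 0 gx.
  rewrite (hq2 g'z gp) leey; split => //.
  by rewrite ler_pM2r ?invr_gt0 //; nra.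
move=> gle'; have -> : gx = 0 by apply/le_anti; rewrite gle'.
by rewrite addr0.
Qed.

Lemma inv_lemma (R : realType) (t : nat) (lam : R) (q : 'I_t -> \bar R)
    (g g' : 'I_t -> R) (s : seq 'I_t) :
  0 <= lam -> (forall i, 0 <= g i) -> (forall i, 0 <= g' i) ->
  (forall i, 0 < g' i -> q i = (g i / g' i)%:E) ->
  (forall i, g' i = 0 -> 0 < g i -> q i = +oo%E) ->
  uniq s -> pairwise (fun x y => q y <= q x)%E s ->
  let AB := foldl (greedy_step lam q g g') (0, 0) s in
  let h := (1 + AB.1 * lam) / (1 + AB.2 * lam) in
  exists P : {set 'I_t}, [/\ AB.1 = \sum_(i in P) g i, AB.2 = \sum_(i in P) g' i,
   (forall i, i \in P -> i \in s), (forall i, i \in P -> (h%:E <= q i)%E) &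
   (forall i, i \in s -> i \notin P -> (q i < h%:E)%E)].
Proof.
move=> l0 g0 g'0 hq1 hq2.
elim/last_ind: s => [|s x IH].
  move=> _ _ /=; exists set0; rewrite !big_set0; split => // i; by rewrite inE.
rewrite rcons_uniq pairwise_rcons => /andP[xs us] /andP[/allP allx ps].
have [P [e1 e2 Ps Pacc Prej]] := IH us ps.
rewrite /= foldl_rcons.
set AB := foldl _ _ s in e1 e2 Ps Pacc Prej *.
have xP : x \notin P by apply/negP => /Ps; rewrite (negbTE xs).
have B0 : 0 <= AB.2 by rewrite e2; apply: sumr_ge0.
rewrite /greedy_step; case: ifP => hx /=.
  have [st1 st2] := @step_real R lam AB.1 AB.2 (g x) (g' x) (q x) l0 B0 (g0 x) (g'0 x) (hq1 x) (hq2 x) hx.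
  exists (x |: P); split.
  - by rewrite big_setU1 //= e1 addrC.
  - by rewrite big_setU1 //= e2 addrC.
  - move=> i; rewrite in_setU1 mem_rcons in_cons => /orP[->//|/Ps ->]; by rewrite orbT.
  - move=> i; rewrite in_setU1 => /orP[/eqP->//|iP].
    apply: (le_trans st2); exact: allx (Ps _ iP).
  - move=> i; rewrite mem_rcons in_cons in_setU1 negb_or => /orP[/eqP->|iS];
      first by rewrite eqxx.
    case/andP=> _ iP; apply: (lt_le_trans (Prej _ iS iP)); by rewrite lee_fin.
exists P; split => //.
- by move=> i /Ps; rewrite mem_rcons in_cons => ->; rewrite orbT.
- move=> i; rewrite mem_rcons in_cons => /orP[/eqP->|/Prej//] _.
  by rewrite ltNge hx.
Qed.

Lemma hbarE (R : realType) (t : nat) (eps : R) (g g' : 'I_t -> R) (S : {set 'I_t}) :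
  \sum_(i < t) g i = 1 -> \sum_(i < t) g' i = 1 ->
  Hbar eps g g' S = (1 + (\sum_(i in S) g i) * (expR eps - 1)) /
                    (1 + (\sum_(i in S) g' i) * (expR eps - 1)).
Proof.
move=> s1 s2.
have C f : \sum_(i < t) f i = 1 -> \sum_(i in ~: S) f i + expR eps * \sum_(j in S) f j
   = 1 + (\sum_(i in S) f i) * (expR eps - 1).
  move=> sf.
  have hs : \sum_(i in ~: S) f i = 1 - \sum_(i in S) f i.
    rewrite -sf [in RHS](bigID (mem S)) /=.
    have -> : \sum_(i in ~: S) f i = \sum_(i < t | ~~ (i \in S)) f i.
      by apply: eq_bigl => i; rewrite in_setC.
    have -> : \sum_(i < t | i \in S) f i = \sum_(i in S) f i by [].
    lra.
  rewrite hs; ring.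
by rewrite /Hbar !C.
Qed.

Theorem theorem2 (R : realType) (t : nat) (eps : R) (g g' : 'I_t -> R)
    (q : 'I_t -> \bar R) (pi : {perm 'I_t}) :
  0 <= eps ->
  prob_vec g -> prob_vec g' ->
  (forall i, 0 < g' i -> q i = (g i / g' i)%:E) ->
  (forall i, g' i = 0 -> 0 < g i -> q i = +oo%E) ->
  (forall r s : 'I_t, (r <= s)%N -> (q (pi s) <= q (pi r))%E) ->
  let Halg := H_alg (expR eps - 1) q pi g g' in
  (forall S : {set 'I_t}, Hbar eps g g' S <= Halg) /\
  (exists S : {set 'I_t}, Hbar eps g g' S = Halg).
Proof.
move=> e0 [g0 gs] [g'0 g's] hq1 hq2 hord Halg.
set lam := expR eps - 1.
have l0 : 0 <= lam by rewrite /lam subr_ge0; have := expR_ge1Dx eps; lra.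
set s := [seq pi r | r <- enum 'I_t].
have us : uniq s by rewrite map_inj_uniq ?enum_uniq //; exact: perm_inj.
have ps : pairwise (fun x y => q y <= q x)%E s.
  rewrite pairwise_map.
  have : pairwise (fun r s : 'I_t => (r <= s)%N) (enum 'I_t).
    by have := iota_sorted 0 t; rewrite -val_enum_ord sorted_pairwise ?pairwise_map //; exact: leq_trans.
  by apply: sub_pairwise => r r' /hord.
have allS i : i \in s.
  by apply/mapP; exists (pi^-1 i)%g; rewrite ?mem_enum ?permKV.
have := @inv_lemma R t lam q g g' s l0 g0 g'0 hq1 hq2 us ps.
set AB := foldl _ _ s => /= -[P [e1 e2 _ Pacc Prej]].
have hE : Halg = (1 + AB.1 * lam) / (1 + AB.2 * lam) by [].
rewrite hE; set h := _ / _ in Pacc Prej *.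
have pos (X : {set 'I_t}) : 0 < 1 + (\sum_(i in X) g' i) * lam.
  have : 0 <= \sum_(i in X) g' i by apply: sumr_ge0.
  by clear -l0; nra.
have acc i : i \in P -> h * g' i <= g i.
  move=> /Pacc; have [gp|] := ltP 0 (g' i).
    by rewrite hq1 // lee_fin ler_pdivlMr // mulrC.
  move=> gle; have -> : g' i = 0 by apply/le_anti; rewrite gle g'0.
  by rewrite mulr0.
have rej i : i \notin P -> g i <= h * g' i.
  move=> /(Prej _ (allS i)); have [gp|] := ltP 0 (g' i).
    by rewrite hq1 // lte_fin ltr_pdivrMr // mulrC => /ltW.
  move=> gle; have g'z : g' i = 0 by apply/le_anti; rewrite gle g'0.
  have [gp|] := ltP 0 (g i); first by rewrite hq2.
  by rewrite g'z mulr0.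
have key (S : {set 'I_t}) : \sum_(i in S) g i - h * \sum_(i in S) g' i <=
             \sum_(i in P) g i - h * \sum_(i in P) g' i.
  rewrite !mulr_sumr -!sumrB big_mkcond [X in _ <= X]big_mkcond /=.
  apply: ler_sum => i _; case: (boolP (i \in S)); case: (boolP (i \in P)) => // iP _.
  - by rewrite subr_le0 rej.
  - by rewrite subr_ge0 acc.
have hP : h * (1 + AB.2 * lam) = 1 + AB.1 * lam.
  by rewrite /h divfK // ?gt_eqF // e2 pos.
split.
  move=> S; rewrite hbarE // -/lam ler_pdivrMr // mulrC.
  have := key S; rewrite -e1 -e2; move: hP.
  set a := \sum_(i in S) g i; set b := \sum_(i in S) g' i.
  clear -l0; nra.
by exists P; rewrite hbarE // -/lam -e1 -e2.
Qed.
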